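(* Let ${\bf a}=(a_n)_{n\in\mathbb N}$ be complex numbers, $A_n=\sum_{k=0}^n|a_k|$. Assume that for every contraction $P$ on every Hilbert space $\mathcal H$ and every $f\in\mathcal H$, the condition $\sum_{n\in\mathbb N}|a_n|A_n\|P^nf\|_{\mathcal H}^2<\infty$ implies that $\sum_{n\in\mathbb N}a_nP^nf$ converges in $\mathcal H$. Then the Nörlund matrix $N_{\bf a}$ is bounded on $\ell^2(\mathbb N)$.
   Context: The Nörlund matrix $N_{\bf a}=(a_{ij})$ has entries $a_{ij}=a_{i-j}/A_i$ if $0\le j\le i$ and $A_i>0$, and $a_{ij}=0$ otherwise; it is bounded on $\ell^2(\mathbb N)$ if there is $C$ with $\|N_{\bf a}u\|_{\ell^2}\le C\|u\|_{\ell^2}$ for all finitely supported sequences $u$. *)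

(* Defs.v *)
From Stdlib Require Import Reals Lra.
Open Scope R_scope.

Definition Cx := (R * R)%type.
Definition RtoC (x : R) : Cx := (x, 0).
Definition C0 : Cx := (0, 0).
Definition C1 : Cx := (1, 0).
Definition Cplus (z w : Cx) : Cx := (fst z + fst w, snd z + snd w).
Definition Cmult (z w : Cx) : Cx :=
  (fst z * fst w - snd z * snd w, fst z * snd w + snd z * fst w).
Definition Cconj (z : Cx) : Cx := (fst z, - snd z).
Definition Cmod (z : Cx) : R := sqrt (fst z ^ 2 + snd z ^ 2).
Definition Re (z : Cx) : R := fst z.

(** * Complex Hilbert spaces (inner product linear in the first argument) *)
Record HilbertSpace : Type := {
  Hcar :> Type;
  Hzero : Hcar;
  Hadd : Hcar -> Hcar -> Hcar;
  Hopp : Hcar -> Hcar;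
  Hscal : Cx -> Hcar -> Hcar;
  Hinner : Hcar -> Hcar -> Cx;
  Hadd_assoc : forall x y z, Hadd x (Hadd y z) = Hadd (Hadd x y) z;
  Hadd_comm : forall x y, Hadd x y = Hadd y x;
  Hadd_zero : forall x, Hadd x Hzero = x;
  Hadd_opp : forall x, Hadd x (Hopp x) = Hzero;
  Hscal_one : forall x, Hscal C1 x = x;
  Hscal_assoc : forall a b x, Hscal a (Hscal b x) = Hscal (Cmult a b) x;
  Hscal_distr_l : forall a x y, Hscal a (Hadd x y) = Hadd (Hscal a x) (Hscal a y);
  Hscal_distr_r : forall a b x, Hscal (Cplus a b) x = Hadd (Hscal a x) (Hscal b x);
  Hinner_add_l : forall x y z, Hinner (Hadd x y) z = Cplus (Hinner x z) (Hinner y z);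
  Hinner_scal_l : forall a x y, Hinner (Hscal a x) y = Cmult a (Hinner x y);
  Hinner_conj : forall x y, Hinner y x = Cconj (Hinner x y);
  Hinner_pos : forall x, 0 <= Re (Hinner x x);
  Hinner_def : forall x, Hinner x x = C0 -> x = Hzero;
  Hcomplete : forall s : nat -> Hcar,
    (forall eps, eps > 0 -> exists N, forall m n, (m >= N)%nat -> (n >= N)%nat ->
        sqrt (Re (Hinner (Hadd (s m) (Hopp (s n))) (Hadd (s m) (Hopp (s n))))) < eps) ->
    exists l, forall eps, eps > 0 -> exists N, forall n, (n >= N)%nat ->
        sqrt (Re (Hinner (Hadd (s n) (Hopp l)) (Hadd (s n) (Hopp l)))) < eps
}.

Arguments Hzero {h}. Arguments Hadd {h}. Arguments Hopp {h}.
Arguments Hscal {h}. Arguments Hinner {h}.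

Definition Hnorm {H : HilbertSpace} (x : H) : R := sqrt (Re (Hinner x x)).

Definition contraction {H : HilbertSpace} (P : H -> H) : Prop :=
  (forall x y, P (Hadd x y) = Hadd (P x) (P y)) /\
  (forall a x, P (Hscal a x) = Hscal a (P x)) /\
  (forall x, Hnorm (P x) <= Hnorm x).

Fixpoint Hpsum {H : HilbertSpace} (g : nat -> H) (n : nat) : H :=
  match n with
  | O => g O
  | S m => Hadd (Hpsum g m) (g (S m))
  end.

Definition Hseries_converges {H : HilbertSpace} (g : nat -> H) : Prop :=
  exists l : H, forall eps, eps > 0 -> exists N, forall n, (n >= N)%nat ->
    Hnorm (Hadd (Hpsum g n) (Hopp l)) < eps.

Definition Rseries_converges (s : nat -> R) : Prop := exists l, infinite_sum s l.

Definition Aseq (a : nat -> Cx) (n : nat) : R := sum_f_R0 (fun k => Cmod (a k)) n.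

Definition norlund_entry (a : nat -> Cx) (i j : nat) : Cx :=
  if (Nat.leb j i) then
    (if Rlt_dec 0 (Aseq a i) then Cmult (RtoC (/ Aseq a i)) (a (i - j)%nat) else C0)
  else C0.

Fixpoint Csum (g : nat -> Cx) (n : nat) : Cx :=
  match n with
  | O => g O
  | S m => Cplus (Csum g m) (g (S m))
  end.

(** (N_a u)_i = sum_j a_{ij} u_j ; entries with j > i vanish *)
Definition norlund_apply (a : nat -> Cx) (u : nat -> Cx) (i : nat) : Cx :=
  Csum (fun j => Cmult (norlund_entry a i j) (u j)) i.

Definition finitely_supported (u : nat -> Cx) : Prop :=
  exists M, forall n, (n >= M)%nat -> u n = C0.

(** ||v||_{l^2} <= c * ||u||_{l^2}, with u supported in [0, M) and the l^2 norm of v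
    expressed via all its partial sums. *)
Definition norlund_bounded (a : nat -> Cx) : Prop :=
  exists c : R, forall u : nat -> Cx, forall M : nat,
    (forall n, (n >= M)%nat -> u n = C0) ->
    forall K : nat,
      sqrt (sum_f_R0 (fun i => Cmod (norlund_apply a u i) ^ 2) K)
      <= c * sqrt (sum_f_R0 (fun j => Cmod (u j) ^ 2) M).

(* Main.v *)
Require Import Defs.
From Stdlib Require Import Reals Lra Lia Psatz Classical ClassicalEpsilon FunctionalExtensionality ProofIrrelevance ZArith.
From Coquelicot Require Import Coquelicot.
Require Import Defs.
Open Scope R_scope.

Lemma exs_plus (a b : nat -> R) : ex_series a -> ex_series b -> ex_series (fun n => a n + b n).
Proof. intros Ha Hb. exact (ex_series_plus a b Ha Hb). Qed.

Lemma exs_scal (c : R) (a : nat -> R) : ex_series a -> ex_series (fun n => c * a n).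
Proof. intros Ha. exact (ex_series_scal_l c a Ha). Qed.

Lemma exs_abs (a b : nat -> R) : (forall n, Rabs (a n) <= b n) -> ex_series b -> ex_series a.
Proof. intros H Hb. apply (ex_series_le a b); auto. Qed.

Lemma exs_le (a b : nat -> R) : (forall n, 0 <= a n <= b n) -> ex_series b -> ex_series a.
Proof. intros H Hb. apply (exs_abs a b); auto. intros n. rewrite Rabs_pos_eq; apply H. Qed.

Lemma ser_ge0 (a : nat -> R) : (forall n, 0 <= a n) -> ex_series a -> 0 <= Series a.
Proof.
  intros H Ha. replace 0 with (Series (fun n => 0 * a n)).
  apply Series_le; auto. intros n; split; [lra| specialize (H n); lra].
  rewrite Series_scal_l; ring.
Qed.

Lemma partial_le_ser (a : nat -> R) N : (forall n, 0 <= a n) -> ex_series a -> sum_f_R0 a N <= Series a.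
Proof.
  intros H Ha. rewrite (Series_incr_n a (S N)) by (lia || auto). simpl.
  assert (0 <= Series (fun k => a (S (N + k)))).
  { apply ser_ge0; auto. apply (ex_series_incr_n a (S N)) in Ha. exact Ha. }
  lra.
Qed.

Lemma sum_ge0 (a : nat -> R) N : (forall n, 0 <= a n) -> 0 <= sum_f_R0 a N.
Proof. intros H; induction N; simpl; auto. specialize (H (S N)); lra. Qed.

Lemma bounded_exs (a : nat -> R) B : (forall n, 0 <= a n) -> (forall N, sum_f_R0 a N <= B) ->
  ex_series a /\ Series a <= B.
Proof.
  intros H HB.
  assert (Hg : Un_growing (sum_f_R0 a)). { intros n; simpl; specialize (H (S n)); lra. }
  assert (Hu : has_ub (sum_f_R0 a)). { exists B. intros x [n ->]. auto. }
  destruct (growing_cv _ Hg Hu) as [l Hl].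
  assert (His : is_series a l). { apply is_series_Reals. exact Hl. }
  split. exists l; exact His.
  rewrite (is_series_unique a l His).
  destruct (Rle_dec l B) as [h|h]; auto. exfalso.
  destruct (Hl (l - B)) as [N HN]; [lra|]. specialize (HN N (le_n _)).
  specialize (HB N). unfold Rdist in HN. apply Rabs_def2 in HN. lra.
Qed.

Lemma window_le (h : nat -> R) s n : (forall k, 0 <= h k) ->
  sum_f_R0 (fun r => h (s + r)%nat) n <= sum_f_R0 h (s + n).
Proof.
  intros H. induction n; simpl.
  - rewrite Nat.add_0_r. destruct s; simpl. lra. pose proof (sum_ge0 h s H). lra.
  - replace (s + S n)%nat with (S (s + n)) by lia. simpl. lra.
Qed.

Definition nsq (z : Cx) : R := fst z ^ 2 + snd z ^ 2.
Lemma nsq_ge0 z : 0 <= nsq z. Proof. unfold nsq; nra. Qed.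

Definition l2 := {u : nat -> Cx | ex_series (fun n => nsq (u n))}.

Lemma l2eq (x y : l2) : (forall n, proj1_sig x n = proj1_sig y n) -> x = y.
Proof.
  destruct x as [x px], y as [y py]; simpl; intros H.
  assert (x = y) by (apply functional_extensionality; auto). subst.
  f_equal. apply proof_irrelevance.
Qed.

Lemma prod_abs_le (a b c d : R) : Rabs (a * b + c * d) <= (a^2 + c^2) + (b^2 + d^2).
Proof. apply Rabs_le. pose proof (pow2_ge_0 (a+b)). pose proof (pow2_ge_0 (a-b)).
 pose proof (pow2_ge_0 (c+d)). pose proof (pow2_ge_0 (c-d)). split; nra. Qed.

Lemma prod_abs_le2 (a b c d : R) : Rabs (a * b - c * d) <= (a^2 + c^2) + (b^2 + d^2).
Proof. replace (a*b - c*d) with (a*b + c*(-d)) by ring. eapply Rle_trans. apply prod_abs_le.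
  right; ring. Qed.

Lemma nsq_add_le z w : nsq (Cplus z w) <= 2 * nsq z + 2 * nsq w.
Proof. unfold nsq, Cplus; simpl. pose proof (pow2_ge_0 (fst z - fst w)).
  pose proof (pow2_ge_0 (snd z - snd w)). nra. Qed.
Lemma nsq_mult z w : nsq (Cmult z w) = nsq z * nsq w.
Proof. unfold nsq, Cmult; simpl; ring. Qed.

Definition l2zero : l2.
Proof. exists (fun _ => C0). apply (exs_le _ (fun _ => 0)).
  intros; unfold nsq, C0; simpl; lra. exists 0. apply is_series_Reals.
  intros e He. exists 0%nat. intros. unfold Rdist. rewrite sum_cte. rewrite Rmult_0_l, Rminus_0_r, Rabs_R0; lra. Defined.

Definition l2add (x y : l2) : l2.
Proof. exists (fun n => Cplus (proj1_sig x n) (proj1_sig y n)).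
  apply (exs_le _ (fun n => 2 * nsq (proj1_sig x n) + 2 * nsq (proj1_sig y n))).
  intros n; split; [apply nsq_ge0| apply nsq_add_le].
  apply exs_plus; apply exs_scal; [apply (proj2_sig x)|apply (proj2_sig y)]. Defined.

Definition l2opp (x : l2) : l2.
Proof. exists (fun n => ((- fst (proj1_sig x n)), - snd (proj1_sig x n))).
  apply (exs_le _ (fun n => nsq (proj1_sig x n))).
  intros n; split; [apply nsq_ge0| unfold nsq; simpl; right; ring]. apply (proj2_sig x). Defined.

Definition l2scal (c : Cx) (x : l2) : l2.
Proof. exists (fun n => Cmult c (proj1_sig x n)).
  apply (exs_le _ (fun n => nsq c * nsq (proj1_sig x n))).
  intros n; split; [apply nsq_ge0| rewrite nsq_mult; lra].
  apply exs_scal; apply (proj2_sig x). Defined.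

Definition rip (x y : nat -> Cx) (n : nat) : R := fst (x n) * fst (y n) + snd (x n) * snd (y n).
Definition iip (x y : nat -> Cx) (n : nat) : R := snd (x n) * fst (y n) - fst (x n) * snd (y n).

Lemma rip_exs (x y : l2) : ex_series (rip (proj1_sig x) (proj1_sig y)).
Proof.
  apply (exs_abs _ (fun n => nsq (proj1_sig x n) + nsq (proj1_sig y n))).
  intros n; unfold rip, nsq. apply prod_abs_le.
  apply exs_plus; [apply (proj2_sig x)|apply (proj2_sig y)].
Qed.
Lemma iip_exs (x y : l2) : ex_series (iip (proj1_sig x) (proj1_sig y)).
Proof.
  apply (exs_abs _ (fun n => nsq (proj1_sig x n) + nsq (proj1_sig y n))).
  intros n; unfold iip, nsq. eapply Rle_trans; [apply prod_abs_le2| right; ring].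
  apply exs_plus; [apply (proj2_sig x)|apply (proj2_sig y)].
Qed.

Definition l2inner (x y : l2) : Cx :=
  (Series (rip (proj1_sig x) (proj1_sig y)), Series (iip (proj1_sig x) (proj1_sig y))).

Lemma rip_self (x : nat -> Cx) n : rip x x n = nsq (x n).
Proof. unfold rip, nsq; ring. Qed.

Lemma ser_zero_all (a : nat -> R) : (forall n, 0 <= a n) -> ex_series a -> Series a = 0 -> forall n, a n = 0.
Proof.
  intros H Ha H0 n. pose proof (partial_le_ser a n H Ha).
  destruct n. simpl in H1. specialize (H 0%nat); lra.
  simpl in H1. pose proof (sum_ge0 a n H). specialize (H (S n)). lra.
Qed.

Lemma nsq_zero z : nsq z = 0 -> z = C0.
Proof. destruct z as [p q]. unfold nsq; cbn [fst snd]. intros H.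
  pose proof (pow2_ge_0 p). pose proof (pow2_ge_0 q).
  assert (E1 : p * p = 0) by (simpl in *; lra). assert (E2 : q * q = 0) by (simpl in *; lra).
  apply Rmult_integral in E1. apply Rmult_integral in E2.
  assert (p = 0) by tauto. assert (q = 0) by tauto. subst. reflexivity. Qed.

Ltac cxr := repeat match goal with |- context [proj1_sig ?x ?n] => 
   let p := fresh "p" in let q := fresh "q" in destruct (proj1_sig x n) as [p q] end;
   unfold Cplus, Cmult, C1, C0, Cconj; simpl; f_equal; ring.

Lemma l2_assoc (x y z : l2) : l2add x (l2add y z) = l2add (l2add x y) z.
Proof. apply l2eq; intros n; simpl. unfold Cplus; simpl; f_equal; ring. Qed.
Lemma l2_comm (x y : l2) : l2add x y = l2add y x.
Proof. apply l2eq; intros n; simpl. unfold Cplus; simpl; f_equal; ring. Qed.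
Lemma l2_zero (x : l2) : l2add x l2zero = x.
Proof. apply l2eq; intros n; simpl. destruct (proj1_sig x n); unfold Cplus, C0; simpl; f_equal; ring. Qed.
Lemma l2_opp (x : l2) : l2add x (l2opp x) = l2zero.
Proof. apply l2eq; intros n; simpl. unfold Cplus, C0; simpl; f_equal; ring. Qed.
Lemma l2_one (x : l2) : l2scal C1 x = x.
Proof. apply l2eq; intros n; simpl. destruct (proj1_sig x n); unfold Cmult, C1; simpl; f_equal; ring. Qed.
Lemma l2_sassoc a b (x : l2) : l2scal a (l2scal b x) = l2scal (Cmult a b) x.
Proof. apply l2eq; intros n; simpl. unfold Cmult; simpl; f_equal; ring. Qed.
Lemma l2_sdl a (x y : l2) : l2scal a (l2add x y) = l2add (l2scal a x) (l2scal a y).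
Proof. apply l2eq; intros n; simpl. unfold Cmult, Cplus; simpl; f_equal; ring. Qed.
Lemma l2_sdr a b (x : l2) : l2scal (Cplus a b) x = l2add (l2scal a x) (l2scal b x).
Proof. apply l2eq; intros n; simpl. unfold Cmult, Cplus; simpl; f_equal; ring. Qed.

Lemma l2_inner_add (x y z : l2) : l2inner (l2add x y) z = Cplus (l2inner x z) (l2inner y z).
Proof.
  unfold l2inner, Cplus; simpl. f_equal.
  - rewrite <- Series_plus by apply rip_exs. apply Series_ext; intros n; unfold rip, Cplus; simpl; ring.
  - rewrite <- Series_plus by apply iip_exs. apply Series_ext; intros n; unfold iip, Cplus; simpl; ring.
Qed.

Lemma l2_inner_scal a (x y : l2) : l2inner (l2scal a x) y = Cmult a (l2inner x y).
Proof.
  unfold l2inner, Cmult; simpl. f_equal.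
  - rewrite <- Series_scal_l, <- Series_scal_l, <- Series_minus.
    apply Series_ext; intros n; unfold rip, iip, Cmult; simpl; ring.
    apply exs_scal, rip_exs. apply exs_scal, iip_exs.
  - rewrite <- Series_scal_l, <- Series_scal_l, <- Series_plus.
    apply Series_ext; intros n; unfold rip, iip, Cmult; simpl; ring.
    apply exs_scal, iip_exs. apply exs_scal, rip_exs.
Qed.

Lemma l2_inner_conj (x y : l2) : l2inner y x = Cconj (l2inner x y).
Proof.
  unfold l2inner, Cconj; simpl. f_equal.
  - apply Series_ext; intros n; unfold rip; ring.
  - rewrite <- Series_opp. apply Series_ext; intros n; unfold iip; ring.
Qed.

Lemma l2_normsq (x : l2) : Re (l2inner x x) = Series (fun n => nsq (proj1_sig x n)).
Proof. unfold Re, l2inner; simpl. apply Series_ext; intros; apply rip_self. Qed.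

Lemma l2_pos (x : l2) : 0 <= Re (l2inner x x).
Proof. rewrite l2_normsq. apply ser_ge0. intros; apply nsq_ge0. apply (proj2_sig x). Qed.

Lemma l2_def (x : l2) : l2inner x x = C0 -> x = l2zero.
Proof.
  intros H. assert (H1 : Re (l2inner x x) = 0) by (rewrite H; reflexivity).
  rewrite l2_normsq in H1. apply l2eq; intros n. simpl.
  pose proof (ser_zero_all _ (fun n => nsq_ge0 _) (proj2_sig x) H1 n) as Hn.
  apply nsq_zero. exact Hn.
Qed.

Lemma Un_cv_ext (u v : nat -> R) l : (forall n, u n = v n) -> Un_cv u l -> Un_cv v l.
Proof. intros H Hu e He. destruct (Hu e He) as [N HN]. exists N. intros n Hn. rewrite <- H. auto. Qed.

Lemma Un_cv_const c : Un_cv (fun _ => c) c.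
Proof. intros e He; exists 0%nat; intros; unfold Rdist; rewrite Rminus_diag, Rabs_R0; lra. Qed.

Lemma Un_cv_sqdiff (X : nat -> R) x c : Un_cv X x -> Un_cv (fun n => (c - X n) ^ 2) ((c - x) ^ 2).
Proof.
  intros H. assert (H1 : Un_cv (fun n => c - X n) (c - x)) by (apply CV_minus; [apply Un_cv_const|auto]).
  pose proof (CV_mult _ _ _ _ H1 H1) as H2.
  replace ((c - x)^2) with ((c-x)*(c-x)) by ring.
  eapply Un_cv_ext; [|exact H2]. intros; simpl; ring.
Qed.

Lemma Un_cv_le (u : nat -> R) l B N : (forall n, (n >= N)%nat -> u n <= B) -> Un_cv u l -> l <= B.
Proof.
  intros H Hu. destruct (Rle_dec l B) as [h|h]; auto. exfalso.
  destruct (Hu (l - B)) as [M HM]; [lra|]. specialize (HM (max M N) ltac:(lia)).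
  specialize (H (max M N) ltac:(lia)). unfold Rdist in HM. apply Rabs_def2 in HM. lra.
Qed.

Lemma sqrt_lt_sq x e : 0 <= x -> sqrt x < e -> x < e * e.
Proof. intros Hx H. pose proof (sqrt_sqrt x Hx). pose proof (sqrt_pos x). nra. Qed.

Lemma lt_sq_sqrt x e : 0 <= x -> 0 < e -> x < e * e -> sqrt x < e.
Proof. intros Hx He H. rewrite <- (sqrt_square e) by lra. apply sqrt_lt_1; nra. Qed.

Definition dif (z w : Cx) : Cx := Cplus z ((- fst w), - snd w).

Lemma nsq_dif_fst z w : (fst z - fst w) ^ 2 <= nsq (dif z w).
Proof. unfold nsq, dif, Cplus; simpl. pose proof (pow2_ge_0 (snd z + - snd w)). 
  replace (fst z - fst w) with (fst z + - fst w) by ring. lra. Qed.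
Lemma nsq_dif_snd z w : (snd z - snd w) ^ 2 <= nsq (dif z w).
Proof. unfold nsq, dif, Cplus; simpl. pose proof (pow2_ge_0 (fst z + - fst w)). 
  replace (snd z - snd w) with (snd z + - snd w) by ring. lra. Qed.

Lemma nsq_dif_cv (X : nat -> Cx) (x z : Cx) :
  Un_cv (fun n => fst (X n)) (fst x) -> Un_cv (fun n => snd (X n)) (snd x) ->
  Un_cv (fun n => nsq (dif z (X n))) (nsq (dif z x)).
Proof.
  intros H1 H2. unfold nsq, dif, Cplus; cbn [fst snd].
  replace ((fst z + - fst x) ^ 2 + (snd z + - snd x) ^ 2) with ((fst z - fst x) ^ 2 + (snd z - snd x) ^ 2) by ring.
  eapply Un_cv_ext; [| apply CV_plus; [apply (Un_cv_sqdiff _ _ (fst z) H1)|apply (Un_cv_sqdiff _ _ (snd z) H2)]].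
  intros n; cbv beta; ring.
Qed.

Lemma nsq_tri z w : nsq w <= 2 * nsq z + 2 * nsq (dif z w).
Proof. destruct z as [a b], w as [c d]. unfold nsq, dif, Cplus; cbn [fst snd].
  pose proof (pow2_ge_0 (2*a - c)). pose proof (pow2_ge_0 (2*b-d)). nra. Qed.

Lemma sq_lt_abs (t e : R) : 0 < e -> t ^ 2 < e * e -> Rabs t < e.
Proof. intros He H. apply Rabs_def1; nra. Qed.

Lemma l2_complete : forall s : nat -> l2,
    (forall eps, eps > 0 -> exists N, forall m n, (m >= N)%nat -> (n >= N)%nat ->
        sqrt (Re (l2inner (l2add (s m) (l2opp (s n))) (l2add (s m) (l2opp (s n))))) < eps) ->
    exists l, forall eps, eps > 0 -> exists N, forall n, (n >= N)%nat ->
        sqrt (Re (l2inner (l2add (s n) (l2opp l)) (l2add (s n) (l2opp l)))) < eps.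
Proof.
  intros s HC.
  set (S := fun m => proj1_sig (s m)).
  assert (HC2 : forall eps, eps > 0 -> exists N, forall m n, (m >= N)%nat -> (n >= N)%nat ->
     Series (fun j => nsq (dif (S m j) (S n j))) < eps * eps).
  { intros eps He. destruct (HC eps He) as [N HN]. exists N. intros m n Hm Hn.
    specialize (HN m n Hm Hn). rewrite l2_normsq in HN. apply sqrt_lt_sq; auto.
    apply ser_ge0; [intros; apply nsq_ge0| apply (proj2_sig (l2add (s m) (l2opp (s n))))]. }
  assert (Hpt : forall eps, eps > 0 -> exists N, forall m n, (m >= N)%nat -> (n >= N)%nat ->
     forall j, nsq (dif (S m j) (S n j)) < eps * eps).
  { intros eps He. destruct (HC2 eps He) as [N HN]. exists N. intros m n Hm Hn j.
    specialize (HN m n Hm Hn). eapply Rle_lt_trans; [|exact HN].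
    pose proof (partial_le_ser (fun j => nsq (dif (S m j) (S n j))) j (fun _ => nsq_ge0 _)
       (proj2_sig (l2add (s m) (l2opp (s n))))).
    destruct j; simpl in *; auto. pose proof (sum_ge0 (fun j => nsq (dif (S m j) (S n j))) j (fun _ => nsq_ge0 _)). lra. }
  assert (cc1 : forall j, Cauchy_crit (fun m => fst (S m j))).
  { intros j e He. destruct (Hpt e He) as [N HN]. exists N. intros n m Hn Hm. unfold Rdist.
    apply sq_lt_abs; auto. eapply Rle_lt_trans; [apply nsq_dif_fst| apply HN; auto]. }
  assert (cc2 : forall j, Cauchy_crit (fun m => snd (S m j))).
  { intros j e He. destruct (Hpt e He) as [N HN]. exists N. intros n m Hn Hm. unfold Rdist.
    apply sq_lt_abs; auto. eapply Rle_lt_trans; [apply nsq_dif_snd| apply HN; auto]. }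
  set (L := fun j => (proj1_sig (Rcomplete.R_complete _ (cc1 j)), proj1_sig (Rcomplete.R_complete _ (cc2 j)))).
  assert (HL1 : forall j, Un_cv (fun m => fst (S m j)) (fst (L j))).
  { intros j. unfold L; simpl. apply (proj2_sig (Rcomplete.R_complete _ (cc1 j))). }
  assert (HL2 : forall j, Un_cv (fun m => snd (S m j)) (snd (L j))).
  { intros j. unfold L; simpl. apply (proj2_sig (Rcomplete.R_complete _ (cc2 j))). }
  assert (Hsum : forall m J, Un_cv (fun n => sum_f_R0 (fun j => nsq (dif (S m j) (S n j))) J)
                                 (sum_f_R0 (fun j => nsq (dif (S m j) (L j))) J)).
  { intros m J. induction J.
    - simpl. apply nsq_dif_cv; auto.
    - simpl. apply CV_plus; auto. apply nsq_dif_cv; auto. }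
  assert (Hbd : forall eps, eps > 0 -> exists N, forall m, (m >= N)%nat ->
     ex_series (fun j => nsq (dif (S m j) (L j))) /\ Series (fun j => nsq (dif (S m j) (L j))) <= eps * eps).
  { intros eps He. destruct (HC2 eps He) as [N HN]. exists N. intros m Hm.
    apply bounded_exs. intros; apply nsq_ge0. intros J.
    apply (Un_cv_le (fun n => sum_f_R0 (fun j => nsq (dif (S m j) (S n j))) J) _ _ N); [| apply Hsum]. intros n Hn. left.
    eapply Rle_lt_trans; [| apply (HN m n Hm Hn)]. apply partial_le_ser. intros; apply nsq_ge0.
    apply (proj2_sig (l2add (s m) (l2opp (s n)))). }
  assert (HLl2 : ex_series (fun j => nsq (L j))).
  { destruct (Hbd 1 ltac:(lra)) as [N HN]. destruct (HN N (le_n _)) as [Hex _].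
    apply (exs_le _ (fun j => 2 * nsq (S N j) + 2 * nsq (dif (S N j) (L j)))).
    - intros j. split. apply nsq_ge0. apply nsq_tri.
    - apply exs_plus; apply exs_scal; auto. apply (proj2_sig (s N)). }
  exists (exist _ L HLl2). intros eps He.
  destruct (Hbd (eps/2) ltac:(lra)) as [N HN]. exists N. intros n Hn.
  rewrite l2_normsq. destruct (HN n Hn) as [Hex Hle].
  apply lt_sq_sqrt; auto. apply ser_ge0; auto; intros; apply nsq_ge0.
  simpl. eapply Rle_lt_trans; [exact Hle| nra].
Qed.

Definition L2 : HilbertSpace :=
  {| Hcar := l2; Hzero := l2zero; Hadd := l2add; Hopp := l2opp; Hscal := l2scal; Hinner := l2inner;
     Hadd_assoc := l2_assoc; Hadd_comm := l2_comm; Hadd_zero := l2_zero; Hadd_opp := l2_opp;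
     Hscal_one := l2_one; Hscal_assoc := l2_sassoc; Hscal_distr_l := l2_sdl; Hscal_distr_r := l2_sdr;
     Hinner_add_l := l2_inner_add; Hinner_scal_l := l2_inner_scal; Hinner_conj := l2_inner_conj;
     Hinner_pos := l2_pos; Hinner_def := l2_def; Hcomplete := l2_complete |}.

Lemma Cmod_sq z : Cmod z ^ 2 = nsq z.
Proof. unfold Cmod. rewrite pow2_sqrt; [reflexivity| apply nsq_ge0]. Qed.

Lemma fst_Csum g n : fst (Csum g n) = sum_f_R0 (fun i => fst (g i)) n.
Proof. induction n; simpl; auto. rewrite IHn; reflexivity. Qed.
Lemma snd_Csum g n : snd (Csum g n) = sum_f_R0 (fun i => snd (g i)) n.
Proof. induction n; simpl; auto. rewrite IHn; reflexivity. Qed.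

Lemma Cx_eq (z w : Cx) : fst z = fst w -> snd z = snd w -> z = w.
Proof. destruct z, w; simpl; intros; subst; auto. Qed.

Lemma Csum_ext g h n : (forall i, (i <= n)%nat -> g i = h i) -> Csum g n = Csum h n.
Proof. induction n; intros H; simpl. apply H; lia. rewrite IHn by (intros; apply H; lia). rewrite H by lia. auto. Qed.

Lemma sum_ext' (g h : nat -> R) n : (forall i, (i <= n)%nat -> g i = h i) -> sum_f_R0 g n = sum_f_R0 h n.
Proof. induction n; intros H; simpl. apply H; lia. rewrite IHn by (intros; apply H; lia). rewrite H by lia. auto. Qed.

Lemma Cplus_C0 z : Cplus z C0 = z.
Proof. apply Cx_eq; unfold Cplus, C0; simpl; ring. Qed.

Lemma Csum_zero_tail g n m : (forall i, (n < i <= m)%nat -> g i = C0) -> (n <= m)%nat -> Csum g m = Csum g n.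
Proof.
  intros H Hnm. induction m. assert (n = 0)%nat by lia. subst; auto.
  destruct (Nat.eq_dec n (S m)). subst; auto.
  simpl. rewrite IHm by (try (intros; apply H); lia). rewrite H by lia. apply Cplus_C0.
Qed.

Lemma sum_zero_tail (g : nat -> R) n m : (forall i, (n < i <= m)%nat -> g i = 0) -> (n <= m)%nat -> sum_f_R0 g m = sum_f_R0 g n.
Proof.
  intros H Hnm. induction m. assert (n = 0)%nat by lia. subst; auto.
  destruct (Nat.eq_dec n (S m)). subst; auto.
  simpl. rewrite IHm by (try (intros; apply H); lia). rewrite H by lia. ring.
Qed.

Lemma sum_prefix_le (g : nat -> R) n m : (forall i, 0 <= g i) -> (n <= m)%nat -> sum_f_R0 g n <= sum_f_R0 g m.
Proof. intros H Hnm. induction Hnm. lra. simpl. specialize (H (S m)). lra. Qed.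

Lemma Csum_mult_l c g n : Cmult c (Csum g n) = Csum (fun i => Cmult c (g i)) n.
Proof. induction n; simpl; auto. rewrite <- IHn. apply Cx_eq; unfold Cmult, Cplus; simpl; ring. Qed.

Lemma sum_exchange (g : nat -> nat -> R) n m :
  sum_f_R0 (fun i => sum_f_R0 (fun j => g i j) m) n = sum_f_R0 (fun j => sum_f_R0 (fun i => g i j) n) m.
Proof.
  induction n; simpl. reflexivity. rewrite IHn. rewrite <- sum_plus. reflexivity.
Qed.

Lemma Csum_exchange (g : nat -> nat -> Cx) n m :
  Csum (fun i => Csum (fun j => g i j) m) n = Csum (fun j => Csum (fun i => g i j) n) m.
Proof.
  apply Cx_eq.
  - rewrite !fst_Csum. rewrite (sum_ext' _ (fun i => sum_f_R0 (fun j => fst (g i j)) m)) by (intros; apply fst_Csum).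
    rewrite sum_exchange. apply sum_ext'. intros; rewrite fst_Csum; reflexivity.
  - rewrite !snd_Csum. rewrite (sum_ext' _ (fun i => sum_f_R0 (fun j => snd (g i j)) m)) by (intros; apply snd_Csum).
    rewrite sum_exchange. apply sum_ext'. intros; rewrite snd_Csum; reflexivity.
Qed.

Definition Tv (a : nat -> Cx) (v : nat -> Cx) (K r : nat) : Cx :=
  Csum (fun i => Cmult (norlund_entry a i r) (v i)) K.

Lemma re_mult_le (t : R) z w : 0 < t -> fst (Cmult z w) <= (t * nsq z + nsq w / t) / 2.
Proof.
  intros Ht. destruct z as [x y], w as [x' y']. unfold Cmult, nsq; cbn [fst snd].
  assert (H : 2 * t * (x * x' - y * y') <= t * t * (x^2 + y^2) + (x'^2 + y'^2)).
  { pose proof (pow2_ge_0 (t*x - x')). pose proof (pow2_ge_0 (t*y + y')). nra. }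
  apply (Rmult_le_reg_l (2*t)). lra. field_simplify; [|lra]. nra.
Qed.

Lemma norlund_entry_gt a i j : (i < j)%nat -> norlund_entry a i j = C0.
Proof. intros H. unfold norlund_entry. destruct (Nat.leb j i) eqn:E; auto. apply Nat.leb_le in E; lia. Qed.

Lemma Cmult_C0_l z : Cmult C0 z = C0.
Proof. apply Cx_eq; unfold Cmult, C0; simpl; ring. Qed.

Lemma conj_mult z : Cmult (Cconj z) z = (nsq z, 0).
Proof. apply Cx_eq; unfold Cmult, Cconj, nsq; simpl; ring. Qed.

Lemma identity_X a u K :
  sum_f_R0 (fun i => nsq (norlund_apply a u i)) K =
  sum_f_R0 (fun j => fst (Cmult (u j) (Tv a (fun i => if Nat.leb i K then Cconj (norlund_apply a u i) else C0) K j))) K.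
Proof.
  set (v := fun i => if Nat.leb i K then Cconj (norlund_apply a u i) else C0).
  rewrite <- fst_Csum.
  rewrite (Csum_ext _ (fun j => Csum (fun i => Cmult (v i) (Cmult (norlund_entry a i j) (u j))) K)).
  2:{ intros j _. unfold Tv. rewrite Csum_mult_l. apply Csum_ext. intros i _.
      apply Cx_eq; unfold Cmult; simpl; ring. }
  rewrite <- Csum_exchange.
  rewrite (Csum_ext _ (fun i => Cmult (Cconj (norlund_apply a u i)) (norlund_apply a u i))).
  2:{ intros i Hi. rewrite <- Csum_mult_l. unfold v. replace (Nat.leb i K) with true by (symmetry; apply Nat.leb_le; auto).
      f_equal. unfold norlund_apply. apply Csum_zero_tail; auto.
      intros j Hj. rewrite norlund_entry_gt by lia. apply Cmult_C0_l. }
  rewrite fst_Csum. apply sum_ext'. intros i _. rewrite conj_mult. reflexivity.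
Qed.

Lemma sum_lin (p q : nat -> R) D K : 0 < D ->
  sum_f_R0 (fun j => (D * p j + q j / D) / 2) K = (D * sum_f_R0 p K + sum_f_R0 q K / D) / 2.
Proof. intros HD. induction K; simpl. reflexivity. rewrite IHK. field. lra. Qed.

Lemma nsq_conj z : nsq (Cconj z) = nsq z.
Proof. unfold nsq, Cconj; simpl; ring. Qed.

Lemma unbounded_vec a : ~ norlund_bounded a -> forall D, 0 < D ->
  exists K (v : nat -> Cx), (forall i, (K < i)%nat -> v i = C0) /\
    0 < sum_f_R0 (fun r => nsq (v r)) K /\
    D * sum_f_R0 (fun r => nsq (v r)) K <= sum_f_R0 (fun r => nsq (Tv a v K r)) K.
Proof.
  intros Hnb D HD.
  destruct (classic (exists u M, (forall n, (n >= M)%nat -> u n = C0) /\ exists K,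
     sqrt D * sqrt (sum_f_R0 (fun j => Cmod (u j) ^ 2) M) <
     sqrt (sum_f_R0 (fun i => Cmod (norlund_apply a u i) ^ 2) K))) as [Hex|Hno].
  2:{ exfalso. apply Hnb. exists (sqrt D). intros u M Hu K. apply Rnot_lt_le. intros Hlt.
      apply Hno. exists u, M. split; auto. exists K; auto. }
  destruct Hex as [u [M [Hu [K Hlt]]]].
  set (X := sum_f_R0 (fun i => nsq (norlund_apply a u i)) K).
  set (U := sum_f_R0 (fun j => nsq (u j)) M).
  assert (EX : sum_f_R0 (fun i => Cmod (norlund_apply a u i) ^ 2) K = X) by (apply sum_ext'; intros; apply Cmod_sq).
  assert (EU : sum_f_R0 (fun j => Cmod (u j) ^ 2) M = U) by (apply sum_ext'; intros; apply Cmod_sq).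
  rewrite EX, EU in Hlt. rewrite <- sqrt_mult_alt in Hlt by lra. apply sqrt_lt_0_alt in Hlt.
  assert (HU0 : 0 <= U) by (apply sum_ge0; intros; apply nsq_ge0).
  set (v := fun i => if Nat.leb i K then Cconj (norlund_apply a u i) else C0).
  exists K, v.
  assert (Xv : sum_f_R0 (fun r => nsq (v r)) K = X).
  { apply sum_ext'. intros i Hi. unfold v. replace (Nat.leb i K) with true by (symmetry; apply Nat.leb_le; auto).
    apply nsq_conj. }
  rewrite Xv. split; [|split].
  - intros i Hi. unfold v. replace (Nat.leb i K) with false by (symmetry; apply Nat.leb_gt; auto). reflexivity.
  - pose proof (Rmult_le_pos _ _ (Rlt_le _ _ HD) HU0). lra.
  - set (Y := sum_f_R0 (fun r => nsq (Tv a v K r)) K).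
    assert (HX : X <= (D * U + Y / D) / 2).
    { unfold X. rewrite identity_X. fold v.
      eapply Rle_trans. apply sum_Rle. intros j _. apply (re_mult_le D); auto.
      rewrite sum_lin by auto. fold Y.
      assert (sum_f_R0 (fun j => nsq (u j)) K <= U).
      { unfold U. destruct (Compare_dec.le_lt_dec K M).
        - apply sum_prefix_le; auto; intros; apply nsq_ge0.
        - rewrite (sum_zero_tail _ M K); [lra| |lia]. intros i Hi. rewrite Hu by lia. unfold nsq, C0; simpl; ring. }
      pose proof (Rinv_0_lt_compat D HD). nra. }
    destruct (Rle_dec (D * X) Y) as [h|h]; auto. exfalso.
    assert (Y / D < X). { apply (Rmult_lt_reg_l D); auto. field_simplify; lra. }
    lra.
Qed.

Section Blocks.
Variable Kf : nat -> nat.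

Fixpoint st (k : nat) : nat := match k with O => O | S k => (st k + S (Kf k))%nat end.

Lemma st_S k : st (S k) = (st k + S (Kf k))%nat. Proof. reflexivity. Qed.

Lemma st_mono k k' : (k <= k')%nat -> (st k <= st k')%nat.
Proof. intros H; induction H; simpl; lia. Qed.

Lemma st_ge k : (k <= st k)%nat.
Proof. induction k; simpl; lia. Qed.

Lemma ex_blk j : exists k, (st k <= j < st (S k))%nat.
Proof.
  induction j. exists O. simpl. lia.
  destruct IHj as [k Hk]. destruct (Nat.eq_dec (S j) (st (S k))).
  - exists (S k). rewrite st_S with (k := S k). lia.
  - exists k. lia.
Qed.

Definition blk (j : nat) : nat := proj1_sig (constructive_indefinite_description _ (ex_blk j)).

Lemma blk_spec j : (st (blk j) <= j < st (S (blk j)))%nat.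
Proof. unfold blk. destruct (constructive_indefinite_description _ (ex_blk j)); auto. Qed.

Lemma blk_unique j k : (st k <= j < st (S k))%nat -> blk j = k.
Proof.
  intros Hk. pose proof (blk_spec j). destruct (Nat.lt_trichotomy (blk j) k) as [h|[h|h]]; auto.
  - pose proof (st_mono (S (blk j)) k h). lia.
  - pose proof (st_mono (S k) (blk j) h). lia.
Qed.

Lemma blk_mono j j' : (j <= j')%nat -> (blk j <= blk j')%nat.
Proof.
  intros H. pose proof (blk_spec j). pose proof (blk_spec j').
  destruct (Compare_dec.le_lt_dec (blk j) (blk j')); auto.
  pose proof (st_mono (S (blk j')) (blk j) l). lia.
Qed.

Lemma blk_at k r : (r <= Kf k)%nat -> blk (st k + r) = k.
Proof. intros H. apply blk_unique. simpl. lia. Qed.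

Lemma blk_le_st k j : (st k <= j)%nat -> (k <= blk j)%nat.
Proof.
  intros H. pose proof (blk_spec j). destruct (Compare_dec.le_lt_dec k (blk j)); auto.
  pose proof (st_mono (S (blk j)) k l). lia.
Qed.

Definition loc (j : nat) : nat := (j - st (blk j))%nat.

Lemma loc_le j : (loc j <= j)%nat. Proof. unfold loc; lia. Qed.

Lemma blk_shift_iff n k : blk (k + n) = blk k <-> (n <= loc (n + k))%nat.
Proof.
  replace (n + k)%nat with (k + n)%nat by lia. unfold loc. split.
  - intros E. rewrite E. pose proof (blk_spec k). lia.
  - intros H. pose proof (blk_spec (k + n)). pose proof (blk_mono k (k + n) ltac:(lia)).
    pose proof (blk_le_st (blk (k + n)) k ltac:(lia)). lia.
Qed.

Definition Pfun (x : nat -> Cx) (j : nat) : Cx := if Nat.eqb (blk (S j)) (blk j) then x (S j) else C0.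

Lemma nsq_C0 : nsq C0 = 0. Proof. unfold nsq, C0; simpl; ring. Qed.

Lemma Pfun_le x j : nsq (Pfun x j) <= nsq (x (S j)).
Proof. unfold Pfun. destruct (Nat.eqb _ _). lra. rewrite nsq_C0; apply nsq_ge0. Qed.

Definition Pop (x : l2) : l2.
Proof. exists (Pfun (proj1_sig x)).
  apply (exs_le _ (fun j => nsq (proj1_sig x (S j)))).
  intros; split; [apply nsq_ge0| apply Pfun_le].
  apply (ex_series_incr_1 (fun j => nsq (proj1_sig x j))). apply (proj2_sig x). Defined.

Lemma Pop_contraction : @contraction L2 Pop.
Proof.
  split; [|split].
  - intros x y. apply l2eq; intros n. simpl. unfold Pfun. destruct (Nat.eqb _ _); auto.
    apply Cx_eq; unfold Cplus, C0; simpl; ring.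
  - intros c x. apply l2eq; intros n. simpl. unfold Pfun. destruct (Nat.eqb _ _); auto.
    apply Cx_eq; unfold Cmult, C0; simpl; ring.
  - intros x. unfold Hnorm. apply sqrt_le_1_alt. change (Re (l2inner (Pop x) (Pop x)) <= Re (l2inner x x)). rewrite !l2_normsq. simpl.
    rewrite (Series_incr_1 (fun n => nsq (proj1_sig x n))) by apply (proj2_sig x).
    assert (Series (fun n => nsq (Pfun (proj1_sig x) n)) <= Series (fun k => nsq (proj1_sig x (S k)))).
    { apply Series_le. intros; split; [apply nsq_ge0| apply Pfun_le].
      apply (ex_series_incr_1 (fun j => nsq (proj1_sig x j))). apply (proj2_sig x). }
    pose proof (nsq_ge0 (proj1_sig x 0%nat)). lra.
Qed.

Lemma iter_Pop n (x : l2) j :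
  proj1_sig (Nat.iter n Pop x) j = if Nat.eqb (blk (j + n)) (blk j) then proj1_sig x (j + n)%nat else C0.
Proof.
  revert j. induction n; intros j.
  - simpl. rewrite Nat.add_0_r, Nat.eqb_refl. reflexivity.
  - simpl Nat.iter. change (proj1_sig (Pop (Nat.iter n Pop x)) j) with (Pfun (proj1_sig (Nat.iter n Pop x)) j).
    unfold Pfun. rewrite IHn.
    replace (S j + n)%nat with (j + S n)%nat by lia.
    pose proof (blk_mono j (S j) ltac:(lia)). pose proof (blk_mono (S j) (j + S n) ltac:(lia)).
    destruct (Nat.eqb (blk (S j)) (blk j)) eqn:E1; destruct (Nat.eqb (blk (j + S n)) (blk (S j))) eqn:E2;
    destruct (Nat.eqb (blk (j + S n)) (blk j)) eqn:E3; auto;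
    apply Nat.eqb_eq in E1 || apply Nat.eqb_neq in E1;
    apply Nat.eqb_eq in E2 || apply Nat.eqb_neq in E2;
    apply Nat.eqb_eq in E3 || apply Nat.eqb_neq in E3; lia.
Qed.

Lemma block_sum (h : nat -> R) K :
  sum_f_R0 h (st (S K) - 1) = sum_f_R0 (fun k => sum_f_R0 (fun r => h (st k + r)%nat) (Kf k)) K.
Proof.
  induction K.
  - replace (st 1 - 1)%nat with (Kf 0) by (simpl; lia). simpl. apply sum_ext'; intros; reflexivity.
  - rewrite (tech2 h (st (S K) - 1) (st (S (S K)) - 1)).
    2:{ simpl. simpl in IHK. lia. }
    simpl sum_f_R0 at 3. rewrite <- IHK. f_equal.
    replace (st (S (S K)) - 1 - S (st (S K) - 1))%nat with (Kf (S K)).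
    2:{ rewrite (st_S (S K)). pose proof (st_ge (S K)). lia. }
    apply sum_ext'. intros i _. f_equal. pose proof (st_ge (S K)). simpl in *. lia.
Qed.

Lemma block_bound (h : nat -> R) (beta : nat -> R) B :
  (forall j, 0 <= h j) ->
  (forall k, sum_f_R0 (fun r => h (st k + r)%nat) (Kf k) <= beta k) ->
  (forall K, sum_f_R0 beta K <= B) ->
  ex_series h /\ Series h <= B.
Proof.
  intros H0 Hb HB. apply bounded_exs; auto. intros N.
  eapply Rle_trans. apply (sum_prefix_le h N (st (S N) - 1)); auto.
  pose proof (st_ge (S N)). lia.
  rewrite block_sum. eapply Rle_trans; [|apply (HB N)]. apply sum_Rle. intros; auto.
Qed.

End Blocks.

Lemma Cmod_ge0 z : 0 <= Cmod z. Proof. apply sqrt_pos. Qed.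

Lemma Aseq_ge0 a n : 0 <= Aseq a n.
Proof. apply sum_ge0. intros; apply Cmod_ge0. Qed.

Lemma Aseq_mono a n m : (n <= m)%nat -> Aseq a n <= Aseq a m.
Proof. intros. apply sum_prefix_le; auto. intros; apply Cmod_ge0. Qed.

Lemma sum_aA_le a l : sum_f_R0 (fun n => Cmod (a n) * Aseq a n) l <= Aseq a l ^ 2.
Proof.
  induction l; simpl.
  - unfold Aseq; simpl. lra.
  - unfold Aseq in *; simpl. pose proof (Cmod_ge0 (a (S l))). pose proof (Aseq_ge0 a l). unfold Aseq in H0.
    set (s := sum_f_R0 (fun k => Cmod (a k)) l) in *. set (t := Cmod (a (S l))) in *. simpl in IHl. nra.
Qed.

Lemma sum_ind_le (al : nat -> R) l N : (forall n, 0 <= al n) ->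
  sum_f_R0 (fun n => if Nat.leb n l then al n else 0) N <= sum_f_R0 al l.
Proof.
  intros H. destruct (Compare_dec.le_lt_dec N l).
  - rewrite (sum_ext' _ al). apply sum_prefix_le; auto. intros i Hi.
    replace (Nat.leb i l) with true by (symmetry; apply Nat.leb_le; lia). auto.
  - rewrite (sum_zero_tail _ l N). 2:{ intros i Hi. replace (Nat.leb i l) with false by (symmetry; apply Nat.leb_gt; lia). auto. }
    2: lia. right. apply sum_ext'. intros i Hi. replace (Nat.leb i l) with true by (symmetry; apply Nat.leb_le; lia). auto.
Qed.

Lemma sum_scal (C : R) (g : nat -> R) N : sum_f_R0 (fun r => C * g r) N = C * sum_f_R0 g N.
Proof. induction N; simpl; auto. rewrite IHN; ring. Qed.

Lemma geom_le K : sum_f_R0 (fun k => (/4) ^ k) K <= 2 - (/4) ^ K.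
Proof.
  induction K; simpl. lra. pose proof (pow_le (/4) K ltac:(lra)). lra.
Qed.

Lemma geom_le2 K : sum_f_R0 (fun k => (/4) ^ k) K <= 2.
Proof. pose proof (geom_le K). pose proof (pow_le (/4) K ltac:(lra)). lra. Qed.

Lemma alpha_ex a : (exists r0, 0 < Aseq a r0) -> exists al, 0 < al /\ forall r, 0 < Aseq a r -> al <= Aseq a r.
Proof.
  intros [r0 H0].
  assert (G : forall n, (exists r, (r <= n)%nat /\ 0 < Aseq a r) -> exists al, 0 < al /\ forall r, 0 < Aseq a r -> al <= Aseq a r).
  { induction n; intros [r [Hr Hp]].
    - assert (r = 0)%nat by lia. subst. exists (Aseq a 0). split; auto. intros; apply Aseq_mono; lia.
    - destruct (classic (exists r, (r <= n)%nat /\ 0 < Aseq a r)) as [h|h]. auto.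
      exists (Aseq a (S n)). assert (0 < Aseq a (S n)).
      { eapply Rlt_le_trans; [exact Hp| apply Aseq_mono; auto]. }
      split; auto. intros r' Hr'. destruct (Compare_dec.le_lt_dec r' n).
      + exfalso; apply h; eauto.
      + apply Aseq_mono; lia. }
  apply (G r0). exists r0; split; auto.
Qed.

Lemma trivial_case a : (forall r, ~ 0 < Aseq a r) -> norlund_bounded a.
Proof.
  intros H. exists 0. intros u M _ K. rewrite Rmult_0_l.
  rewrite (sum_ext' _ (fun _ => 0)). 
  - rewrite sum_cte, Rmult_0_l, sqrt_0. lra.
  - intros i _. unfold norlund_apply.
    rewrite (Csum_ext _ (fun _ => C0)).
    + assert (Csum (fun _ => C0) i = C0). { induction i; simpl; auto. rewrite IHi. apply Cplus_C0. }
      rewrite H0. unfold Cmod, C0; simpl. rewrite !Rmult_0_l, Rplus_0_l, sqrt_0. ring.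
    + intros j _. unfold norlund_entry. destruct (Nat.leb j i); [|apply Cmult_C0_l].
      destruct (Rlt_dec 0 (Aseq a i)). exfalso; apply (H i); auto. apply Cmult_C0_l.
Qed.


Lemma Hpsum_pt (g : nat -> l2) m j : proj1_sig (@Hpsum L2 g m) j = Csum (fun n => proj1_sig (g n) j) m.
Proof. induction m; simpl; auto. rewrite <- IHm. reflexivity. Qed.

Lemma Csum_head_zero q r : (forall i, (i < r)%nat -> q i = C0) -> Csum q r = q r.
Proof.
  induction r; intros H; simpl; auto. rewrite IHr by (intros; apply H; lia).
  rewrite H by lia. apply Cx_eq; unfold Cplus, C0; simpl; ring.
Qed.

Lemma Csum_shift q r m : (forall i, (i < r)%nat -> q i = C0) -> Csum (fun n => q (r + n)%nat) m = Csum q (r + m).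
Proof.
  intros H. induction m; simpl.
  - rewrite Nat.add_0_r. symmetry; apply Csum_head_zero; auto.
  - rewrite IHm. replace (r + S m)%nat with (S (r + m)) by lia. reflexivity.
Qed.

Lemma nsq_dif_sym z w : nsq (dif z w) = nsq (dif w z).
Proof. unfold nsq, dif, Cplus; simpl; ring. Qed.

Lemma IZR_le_INR z : IZR z <= INR (Z.to_nat z).
Proof.
  rewrite INR_IZR_INZ. apply IZR_le. lia.
Qed.

Lemma INR_lt_pow4 n : INR n < 4 ^ n.
Proof.
  induction n. simpl; lra. rewrite S_INR. simpl.
  pose proof (pow_R1_Rle 4 n ltac:(lra)). lra.
Qed.

Lemma pow4_unbounded B : exists k, B < 4 ^ k.
Proof.
  destruct (archimed B) as [H _]. exists (Z.to_nat (up B)).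
  pose proof (IZR_le_INR (up B)). pose proof (INR_lt_pow4 (Z.to_nat (up B))). lra.
Qed.

Section Main.
Variable a : nat -> Cx.
Variable Kf : nat -> nat.
Variable vf : nat -> nat -> Cx.
Variable al : R.
Hypothesis Hal : 0 < al.
Hypothesis Hal2 : forall r, 0 < Aseq a r -> al <= Aseq a r.
Definition Xk k := sum_f_R0 (fun r => nsq (vf k r)) (Kf k).
Definition Yk k := sum_f_R0 (fun r => nsq (Tv a (vf k) (Kf k) r)) (Kf k).
Hypothesis HX : forall k, 0 < Xk k.
Hypothesis HY : forall k, 16 ^ k * Xk k <= Yk k.

Definition ck k := sqrt ((/4) ^ k / Xk k).
Lemma ck_sq k : ck k ^ 2 = (/4) ^ k / Xk k.
Proof. unfold ck. rewrite pow2_sqrt; auto. pose proof (HX k). pose proof (pow_le (/4) k ltac:(lra)).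
  apply Rle_mult_inv_pos; auto. Qed.

Definition wk k r := if Rlt_dec 0 (Aseq a r) then Cmult (RtoC (/ Aseq a r)) (vf k r) else C0.
Definition ffun j := Cmult (RtoC (ck (blk Kf j))) (wk (blk Kf j) (loc Kf j)).

Lemma nsq_RtoC_mult c z : nsq (Cmult (RtoC c) z) = c ^ 2 * nsq z.
Proof. rewrite nsq_mult. unfold nsq, RtoC; simpl. ring. Qed.

Lemma ffun_at k r : (r <= Kf k)%nat -> ffun (st Kf k + r) = Cmult (RtoC (ck k)) (wk k r).
Proof. intros H. unfold ffun, loc. rewrite blk_at by auto. f_equal. f_equal. lia. Qed.

Lemma wk_bound k r : nsq (wk k r) <= nsq (vf k r) / al ^ 2.
Proof.
  unfold wk. destruct (Rlt_dec 0 (Aseq a r)).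
  - rewrite nsq_RtoC_mult. specialize (Hal2 r r0). pose proof (nsq_ge0 (vf k r)).
    assert (/ Aseq a r <= / al) by (apply Rinv_le_contravar; auto).
    assert (0 < / Aseq a r) by (apply Rinv_0_lt_compat; auto).
    unfold Rdiv. rewrite (Rmult_comm (nsq (vf k r))). apply Rmult_le_compat_r; auto.
    rewrite <- pow_inv. apply pow_incr; lra.
  - rewrite nsq_C0. apply Rmult_le_pos. apply nsq_ge0. left; apply Rinv_0_lt_compat, pow_lt; auto.
Qed.

Lemma wk_boundA k r : nsq (wk k r) * Aseq a r ^ 2 <= nsq (vf k r).
Proof.
  unfold wk. destruct (Rlt_dec 0 (Aseq a r)).
  - rewrite nsq_RtoC_mult. right. field. lra.
  - rewrite nsq_C0. rewrite Rmult_0_l. apply nsq_ge0.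
Qed.

Lemma ffun_l2 : ex_series (fun j => nsq (ffun j)).
Proof.
  eapply proj1. apply (block_bound Kf _ (fun k => (/4) ^ k / al ^ 2) (2 / al ^ 2) (fun _ => nsq_ge0 _)).
  - intros k. rewrite (sum_ext' _ (fun r => ck k ^ 2 * nsq (wk k r))).
    2:{ intros r Hr. rewrite ffun_at by auto. apply nsq_RtoC_mult. }
    rewrite sum_scal. eapply Rle_trans. apply Rmult_le_compat_l. apply pow2_ge_0.
    apply sum_Rle. intros r _. apply wk_bound.
    rewrite (sum_ext' _ (fun r => / al ^ 2 * nsq (vf k r))) by (intros; unfold Rdiv; ring).
    rewrite sum_scal. rewrite ck_sq. fold (Xk k). right. field. repeat split; apply Rgt_not_eq; first [apply HX | apply pow_lt; exact Hal | exact Hal].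
  - intros K. rewrite (sum_ext' _ (fun k => / al ^ 2 * (/4) ^ k)) by (intros; unfold Rdiv; ring).
    rewrite sum_scal. pose proof (geom_le2 K). pose proof (pow_lt al 2 Hal).
    unfold Rdiv. rewrite Rmult_comm. apply Rmult_le_compat_r; auto. left; apply Rinv_0_lt_compat; auto.
Qed.

Definition fel : l2 := exist _ ffun ffun_l2.

Definition Gm m := ck (blk Kf m) ^ 2 * nsq (vf (blk Kf m) (loc Kf m)).

Lemma G_l2 : ex_series Gm /\ Series Gm <= 2.
Proof.
  apply (block_bound Kf _ (fun k => (/4) ^ k) 2).
  - intros; unfold Gm. apply Rmult_le_pos. apply pow2_ge_0. apply nsq_ge0.
  - intros k. rewrite (sum_ext' _ (fun r => ck k ^ 2 * nsq (vf k r))).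
    2:{ intros r Hr. unfold Gm, loc. rewrite blk_at by auto. do 3 f_equal. lia. }
    rewrite sum_scal. rewrite ck_sq. fold (Xk k). right. field. apply Rgt_not_eq, HX.
  - apply geom_le2.
Qed.

Lemma ffun_G m : nsq (ffun m) * Aseq a (loc Kf m) ^ 2 <= Gm m.
Proof.
  unfold ffun, Gm. rewrite nsq_RtoC_mult. rewrite Rmult_assoc. apply Rmult_le_compat_l. apply pow2_ge_0.
  apply wk_boundA.
Qed.

Definition hn n m := if Nat.leb n (loc Kf m) then nsq (ffun m) else 0.

Lemma hn_le n m : 0 <= hn n m <= nsq (ffun m).
Proof. unfold hn. destruct (Nat.leb _ _); pose proof (nsq_ge0 (ffun m)); lra. Qed.

Lemma hn_exs n : ex_series (hn n).
Proof. apply (exs_le _ _ (hn_le n) ffun_l2). Qed.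

Lemma iter_norm n : Series (fun j => nsq (proj1_sig (Nat.iter n (Pop Kf) fel) j)) = Series (hn n).
Proof.
  assert (E : forall j, nsq (proj1_sig (Nat.iter n (Pop Kf) fel) j) = hn n (n + j)).
  { intros j. rewrite iter_Pop. simpl proj1_sig. unfold hn.
    destruct (Nat.eqb (blk Kf (j + n)) (blk Kf j)) eqn:E1; destruct (Nat.leb n (loc Kf (n + j))) eqn:E2; auto.
    - f_equal; f_equal; lia.
    - apply Nat.eqb_eq, blk_shift_iff in E1. apply Nat.leb_gt in E2. lia.
    - apply Nat.leb_le, blk_shift_iff in E2. apply Nat.eqb_neq in E1. lia.
    - apply nsq_C0. }
  rewrite (Series_ext _ _ E). destruct n.
  - apply Series_ext; intros; reflexivity.
  - rewrite (Series_incr_n (hn (S n)) (S n)) by (lia || apply hn_exs).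
    rewrite (sum_ext' _ (fun _ => 0)). rewrite sum_cte. simpl pred. ring_simplify. reflexivity.
    intros i Hi. unfold hn. pose proof (loc_le Kf i). simpl in Hi.
    replace (Nat.leb (S n) (loc Kf i)) with false by (symmetry; apply Nat.leb_gt; lia). reflexivity.
Qed.

Lemma sum_series (alp : nat -> R) (h : nat -> nat -> R) N : (forall n, ex_series (h n)) ->
  ex_series (fun m => sum_f_R0 (fun n => alp n * h n m) N) /\
  sum_f_R0 (fun n => alp n * Series (h n)) N = Series (fun m => sum_f_R0 (fun n => alp n * h n m) N).
Proof.
  intros H. induction N; simpl.
  - split. apply exs_scal; auto. rewrite Series_scal_l; auto.
  - destruct IHN as [IH1 IH2]. split. apply exs_plus; auto. apply exs_scal; auto.
    rewrite Series_plus; auto. rewrite Series_scal_l, IH2. reflexivity. apply exs_scal; auto.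
Qed.

Lemma premise : Rseries_converges (fun n => Cmod (a n) * Aseq a n * (@Hnorm L2 (Nat.iter n (Pop Kf) fel)) ^ 2).
Proof.
  assert (EN : forall n, (@Hnorm L2 (Nat.iter n (Pop Kf) fel)) ^ 2 = Series (hn n)).
  { intros n. unfold Hnorm. rewrite pow2_sqrt by apply (@Hinner_pos L2).
    change (Re (l2inner (Nat.iter n (Pop Kf) fel) (Nat.iter n (Pop Kf) fel)) = Series (hn n)).
    rewrite l2_normsq. apply iter_norm. }
  destruct G_l2 as [GE GB].
  destruct (bounded_exs (fun n => Cmod (a n) * Aseq a n * (@Hnorm L2 (Nat.iter n (Pop Kf) fel)) ^ 2) 2) as [Hex _].
  - intros n. rewrite EN. apply Rmult_le_pos. apply Rmult_le_pos. apply Cmod_ge0. apply Aseq_ge0.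
    apply ser_ge0. intros; apply hn_le. apply hn_exs.
  - intros N. rewrite (sum_ext' _ (fun n => (Cmod (a n) * Aseq a n) * Series (hn n))) by (intros; rewrite EN; reflexivity).
    destruct (sum_series (fun n => Cmod (a n) * Aseq a n) hn N hn_exs) as [S1 S2].
    rewrite S2. eapply Rle_trans; [|exact GB]. apply Series_le; auto.
    intros m. split.
    + apply sum_ge0. intros n. apply Rmult_le_pos. apply Rmult_le_pos. apply Cmod_ge0. apply Aseq_ge0. apply hn_le.
    + eapply Rle_trans; [|apply ffun_G].
      rewrite (sum_ext' _ (fun n => nsq (ffun m) * (if Nat.leb n (loc Kf m) then Cmod (a n) * Aseq a n else 0))).
      2:{ intros n _. unfold hn. destruct (Nat.leb _ _); ring. }
      rewrite sum_scal. apply Rmult_le_compat_l. apply nsq_ge0.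
      eapply Rle_trans. apply sum_ind_le. intros; apply Rmult_le_pos. apply Cmod_ge0. apply Aseq_ge0.
      apply sum_aA_le.
  - destruct Hex as [l Hl]. exists l. apply is_series_Reals. exact Hl.
Qed.


Lemma psum_block k r m : (r <= Kf k)%nat -> (Kf k <= m)%nat ->
  proj1_sig (@Hpsum L2 (fun n => l2scal (a n) (Nat.iter n (Pop Kf) fel)) m) (st Kf k + r)%nat
  = Cmult (RtoC (ck k)) (Tv a (vf k) (Kf k) r).
Proof.
  intros Hr Hm. rewrite Hpsum_pt.
  set (q := fun i => if Nat.leb r i then (if Nat.leb i (Kf k) then
        Cmult (RtoC (ck k)) (Cmult (norlund_entry a i r) (vf k i)) else C0) else C0).
  rewrite (Csum_ext _ (fun n => q (r + n)%nat)).
  2:{ intros n Hn. change (Cmult (a n) (proj1_sig (Nat.iter n (Pop Kf) fel) (st Kf k + r)%nat) = q (r + n)%nat).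
      rewrite iter_Pop. rewrite (blk_at Kf k r Hr). unfold q.
      replace (Nat.leb r (r + n)) with true by (symmetry; apply Nat.leb_le; lia).
      destruct (Compare_dec.le_lt_dec (r + n) (Kf k)) as [h|h].
      - replace (st Kf k + r + n)%nat with (st Kf k + (r + n))%nat by lia.
        rewrite (blk_at Kf k (r + n) h), Nat.eqb_refl.
        replace (Nat.leb (r + n) (Kf k)) with true by (symmetry; apply Nat.leb_le; lia).
        simpl proj1_sig. rewrite ffun_at by auto. unfold wk, norlund_entry.
        replace (Nat.leb r (r + n)) with true by (symmetry; apply Nat.leb_le; lia).
        replace (r + n - r)%nat with n by lia.
        destruct (Rlt_dec 0 (Aseq a (r + n))); apply Cx_eq; unfold Cmult, RtoC, C0; simpl; ring.
      - assert (HB : (S k <= blk Kf (st Kf k + r + n))%nat) by (apply blk_le_st; simpl; lia).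
        replace (Nat.eqb (blk Kf (st Kf k + r + n)) k) with false by (symmetry; apply Nat.eqb_neq; lia).
        replace (Nat.leb (r + n) (Kf k)) with false by (symmetry; apply Nat.leb_gt; lia).
        apply Cx_eq; unfold Cmult, C0; simpl; ring. }
  rewrite Csum_shift.
  2:{ intros i Hi. unfold q. replace (Nat.leb r i) with false by (symmetry; apply Nat.leb_gt; lia). reflexivity. }
  rewrite (Csum_zero_tail q (Kf k) (r + m)).
  2:{ intros i Hi. unfold q. destruct (Nat.leb r i); auto.
      replace (Nat.leb i (Kf k)) with false by (symmetry; apply Nat.leb_gt; lia). reflexivity. }
  2: lia.
  unfold Tv. rewrite Csum_mult_l. apply Csum_ext. intros i Hi. unfold q.
  replace (Nat.leb i (Kf k)) with true by (symmetry; apply Nat.leb_le; lia).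
  destruct (Nat.leb r i) eqn:E; auto.
  apply Nat.leb_gt in E. rewrite norlund_entry_gt by auto. apply Cx_eq; unfold Cmult, C0, RtoC; simpl; ring.
Qed.

Lemma diverge : ~ @Hseries_converges L2 (fun n => l2scal (a n) (Nat.iter n (Pop Kf) fel)).
Proof.
  intros [l Hl]. destruct (Hl 1 ltac:(lra)) as [N HN].
  set (ps := fun m => @Hpsum L2 (fun n => l2scal (a n) (Nat.iter n (Pop Kf) fel)) m).
  set (Q := Series (fun j => nsq (proj1_sig l j))).
  assert (Hup : forall n, (n >= N)%nat -> Series (fun j => nsq (proj1_sig (ps n) j)) < 2 * Q + 2).
  { intros n Hn. specialize (HN n Hn). unfold Hnorm in HN.
    change (sqrt (Re (l2inner (l2add (ps n) (l2opp l)) (l2add (ps n) (l2opp l)))) < 1) in HN.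
    rewrite l2_normsq in HN. apply sqrt_lt_sq in HN.
    2:{ apply ser_ge0. intros; apply nsq_ge0. apply (proj2_sig (l2add (ps n) (l2opp l))). }
    simpl proj1_sig in HN. fold (dif (proj1_sig (ps n) 0%nat)) in HN.
    set (D := Series (fun j => nsq (dif (proj1_sig (ps n) j) (proj1_sig l j)))).
    assert (HD : D < 1).
    { unfold D. eapply Rlt_le_trans; [|right; apply Rmult_1_r]. eapply Rle_lt_trans; [|exact HN].
      right. apply Series_ext. intros j. reflexivity. }
    assert (Hex : ex_series (fun j => nsq (dif (proj1_sig (ps n) j) (proj1_sig l j))))
      by apply (proj2_sig (l2add (ps n) (l2opp l))).
    eapply Rle_lt_trans.
    apply (Series_le _ (fun j => 2 * nsq (proj1_sig l j) + 2 * nsq (dif (proj1_sig (ps n) j) (proj1_sig l j)))).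
    - intros j. split. apply nsq_ge0. rewrite nsq_dif_sym. apply nsq_tri.
    - apply exs_plus; apply exs_scal; auto. apply (proj2_sig l).
    - rewrite Series_plus, !Series_scal_l. fold Q D. lra.
      apply exs_scal, (proj2_sig l). apply exs_scal; auto. }
  destruct (pow4_unbounded (2 * Q + 2)) as [k Hk].
  set (m := max N (Kf k)).
  specialize (Hup m ltac:(unfold m; lia)).
  assert (Hlow : 4 ^ k <= Series (fun j => nsq (proj1_sig (ps m) j))).
  { eapply Rle_trans; [| apply partial_le_ser; [intros; apply nsq_ge0| apply (proj2_sig (ps m))]].
    eapply Rle_trans; [| apply (window_le _ (st Kf k) (Kf k)); intros; apply nsq_ge0].
    rewrite (sum_ext' _ (fun r => ck k ^ 2 * nsq (Tv a (vf k) (Kf k) r))).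
    2:{ intros r Hr. unfold ps. rewrite psum_block by (unfold m; lia). apply nsq_RtoC_mult. }
    rewrite sum_scal. fold (Yk k). rewrite ck_sq.
    specialize (HY k). pose proof (HX k).
    replace (4 ^ k) with ((/4) ^ k / Xk k * (16 ^ k * Xk k)).
    apply Rmult_le_compat_l; auto. left. apply Rdiv_lt_0_compat; auto. apply pow_lt; lra.
    assert (E4 : (/4) ^ k * 16 ^ k = 4 ^ k) by (rewrite <- Rpow_mult_distr; f_equal; field).
    rewrite <- E4. field. lra. }
  lra.
Qed.
End Main.

Theorem mainTheorem7 (a : nat -> Cx) :
  (forall (H : HilbertSpace) (P : H -> H) (f : H),
      contraction P ->
      Rseries_converges
        (fun n => Cmod (a n) * Aseq a n * (Hnorm (Nat.iter n P f)) ^ 2) ->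
      Hseries_converges (fun n => Hscal (a n) (Nat.iter n P f))) ->
  norlund_bounded a.
Proof.
  intros Hyp. apply NNPP. intros Hnb.
  destruct (classic (exists r0, 0 < Aseq a r0)) as [Hr|Hr].
  2:{ apply Hnb, trivial_case. intros r h; apply Hr; eauto. }
  destruct (alpha_ex a Hr) as [al [Hal Hal2]].
  assert (Hex : forall k, exists p : nat * (nat -> Cx),
    0 < sum_f_R0 (fun r => nsq (snd p r)) (fst p) /\
    16 ^ k * sum_f_R0 (fun r => nsq (snd p r)) (fst p) <= sum_f_R0 (fun r => nsq (Tv a (snd p) (fst p) r)) (fst p)).
  { intros k. destruct (unbounded_vec a Hnb (16 ^ k) ltac:(apply pow_lt; lra)) as [K [v [_ [H1 H2]]]].
    exists (K, v). simpl. auto. }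
  set (F := fun k => proj1_sig (constructive_indefinite_description _ (Hex k))).
  assert (HF : forall k, 0 < sum_f_R0 (fun r => nsq (snd (F k) r)) (fst (F k)) /\
    16 ^ k * sum_f_R0 (fun r => nsq (snd (F k) r)) (fst (F k)) <= sum_f_R0 (fun r => nsq (Tv a (snd (F k)) (fst (F k)) r)) (fst (F k))).
  { intros k. unfold F. destruct (constructive_indefinite_description _ (Hex k)). simpl. auto. }
  set (Kf := fun k => fst (F k)). set (vf := fun k => snd (F k)).
  assert (HX : forall k, 0 < Xk Kf vf k) by (intros k; apply (HF k)).
  assert (HY : forall k, 16 ^ k * Xk Kf vf k <= Yk a Kf vf k) by (intros k; apply (HF k)).
  apply (diverge a Kf vf al Hal Hal2 HX HY).
  apply (Hyp L2 (Pop Kf) (fel a Kf vf al Hal Hal2 HX)).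
  - apply Pop_contraction.
  - apply premise.
Qed.
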